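(* In the model described in the context, if $\tau \leq 2f$, then it is impossible to implement an a-audit operation satisfying completeness.
   Context: Model. An asynchronous system has an arbitrary number of client processes (writers, readers, auditors) and $n$ storage objects $o_1,\dots,o_n$. Each $o_k$ is a linearisable loggable read/write register holding a block from a domain $\mathbb{B}$ and a log $L_k$ (initially empty). Its operations are: rw-write($b$), which stores $b$ and returns an ack; rw-read(), which returns the currently stored block (or $\perp\notin\mathbb{B}$ if none) and appends to $L_k$ the record $\langle p_r, \mathit{label}(b)\rangle$, where $p_r$ is the invoking reader and $\mathit{label}(b)$ identifies the value from which block $b$ was derived; and rw-getLog(), which returns $L_k$. On top of these objects, a multi-writer multi-reader register over a value domain $\mathbb{V}$ is emulated by information dispersal. An a-write($v$) encodes $v$ into $n$ blocks $b_{v_1},\dots,b_{v_n}$ and sends $b_{v_k}$ to $o_k$. A reader can recover $v$ from any $\tau$ distinct blocks of $v$, and cannot recover it from fewer; $\tau>f$. Reads (a-read) are fast, i.e. they complete in a single communication round-trip between the reader and the objects. Concurrency between operations is unlimited, and writes may remain incomplete. Faults. Writers and auditors are honest and can only crash. Faulty readers may crash or send read requests to only a subset of the objects. At most $f$ storage objects are faulty. A faulty object may crash, omit its block from readers, omit records from its log when queried by auditors, and report records of read operations that never occurred. Providing set: in a history $\sigma$, $P_{p_r,v}$ is the set of objects $o_k$ such that $\sigma$ contains both an event in which $o_k$ receives a write request to store $b_{v_k}$ and an event in which $o_k$ responds $b_{v_k}$ to a read request from $p_r$. A value $v$ is effectively read by $p_r$ in $\sigma$ iff $|P_{p_r,v}|\ge\tau$.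 Audit. An a-audit operation obtains logs via rw-getLog. To be available it relies only on an auditing quorum $A$ of $n-f$ objects. It returns a set $E_A$ of evidences. An evidence $\mathcal{E}_{p_r,v}$ (reporting that $p_r$ effectively read $v$) is created from at least $t\ge 1$ records $\langle p_r,\mathit{label}(v)\rangle$ coming from distinct objects; $t$ is a threshold parameter. Completeness: for every reader $p_r$ and every value $v$, if $v$ was effectively read by $p_r$ ($|P_{p_r,v}|\ge\tau$) before the a-audit is invoked, then $\mathcal{E}_{p_r,v}\in E_A$. *)

(* Defs.v *)
(* Abstract model of the state of the emulation at the
   moment an a-audit is invoked, and of what the audit can observe. *)
From mathcomp Require Import all_boot.
Set Implicit Arguments. Unset Strict Implicit. Unset Printing Implicit Defensive.

(* Objects are o_0 .. o_{n-1} : 'I_n.  Readers range over an eqType R,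
   values over an eqType V; label(b_{v_k}) is identified with v itself.
   A log record <p_r, label(v)> is the pair (p_r, v). *)

Record history (n : nat) (R V : eqType) := History {
  faulty  : {set 'I_n};
  (* served k p v : o_k received a write request to store b_{v_k} and
     responded b_{v_k} to a read request of p *)
  served  : 'I_n -> R -> V -> bool;
  trueLog : 'I_n -> seq (R * V)
}.

Definition admissible_history (n f : nat) (R V : eqType) (h : history n R V) :=
  #|faulty h| <= f /\
  forall k, k \notin faulty h -> forall p v,
    served h k p v = ((p, v) \in trueLog h k).

Definition providing_set (n : nat) (R V : eqType) (h : history n R V) p v :=
  [set k | served h k p v].

Definition effectively_read (n tau : nat) (R V : eqType) (h : history n R V) p v :=
  tau <= #|providing_set h p v|.

(* An a-audit: from the auditing quorum A that answered rw-getLog and the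
   logs L k reported by the objects, it returns the set E_A of evidences,
   given as a boolean predicate: audit A L p v  <->  E_{p,v} \in E_A. *)
Definition audit_fun (n : nat) (R V : eqType) :=
  {set 'I_n} -> ('I_n -> seq (R * V)) -> R -> V -> bool.

(* Admissible responses to the audit in history h: an auditing quorum of
   n - f objects answers; correct objects report their true log, faulty
   ones may report anything (omitted or fabricated records). *)
Definition admissible_response (n f : nat) (R V : eqType) (h : history n R V)
    (A : {set 'I_n}) (L : 'I_n -> seq (R * V)) :=
  #|A| = n - f /\ forall k, k \in A -> k \notin faulty h -> L k = trueLog h k.

Definition evidence_sound (n t : nat) (R V : eqType) (audit : audit_fun n R V) :=
  forall A L p v, audit A L p v -> t <= #|[set k in A | (p, v) \in L k]|.

Definition audit_complete (n f tau : nat) (R V : eqType) (audit : audit_fun n R V) :=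
  forall h : history n R V, admissible_history f h ->
  forall A L, admissible_response f h A L ->
  forall p v, effectively_read tau h p v -> audit A L p v.

(* Main.v *)
Require Import Defs.
From mathcomp Require Import all_boot zify.
Lemma cnt n a b : count (fun k => (a <= k) && (k < b)) (iota 0 n) = minn n b - a.
Proof.
elim: n => [|n IH]; first by rewrite min0n.
rewrite -[n.+1]addn1 iotaD count_cat IH /= add0n addn0.
case: (leqP a n) => Ha; case: (ltnP n b) => Hb /=; lia.
Qed.
Lemma cardI n a b : #|[set k : 'I_n | (a <= k) && (k < b)]| = minn n b - a.
Proof.
rewrite cardsE cardE -(cnt n a b) -val_enum_ord count_map /enum_mem size_filter.
by rewrite filter_predT; apply: eq_count => x; rewrite !inE.
Qed.

Theorem lemma2 (n f tau t : nat) (R V : eqType) (p0 : R) (v0 : V) :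
  1 <= t -> f < tau -> tau <= n -> tau <= 2 * f ->
  ~ exists audit : audit_fun n R V,
      evidence_sound t audit /\ audit_complete f tau audit.
Proof.
move=> Ht Hft Htn H2f [audit [Hs Hc]].
pose F := [set k : 'I_n | (n - tau <= k) && (k < n - tau + f)].
pose sv := fun (k : 'I_n) (p : R) (v : V) => (n - tau <= k) && (p == p0) && (v == v0).
pose tl := fun (k : 'I_n) => if n - tau <= k then [:: (p0, v0)] else [::].
pose h := History F sv tl.
pose A := [set k : 'I_n | (0 <= k) && (k < n - f)].
pose L := fun k => if k \in F then [::] else tl k.
have Hh : admissible_history f h.
  split; first by rewrite /= /F cardI; lia.
  move=> k _ p v; rewrite /= /sv /tl.
  case: (n - tau <= k); last by [].
  by rewrite inE xpair_eqE.
have Hr : admissible_response f h A L.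
  split; first by rewrite /A cardI; lia.
  by move=> k _ /= kF; rewrite /L (negbTE kF).
have He : effectively_read tau h p0 v0.
  rewrite /effectively_read /providing_set /= /sv.
  have -> : [set k : 'I_n | (n - tau <= k) && (p0 == p0) && (v0 == v0)]
            = [set k : 'I_n | (n - tau <= k) && (k < n)].
    by apply/setP => k; rewrite !inE !eqxx ltn_ord !andbT.
  rewrite cardI; lia.
have := Hs A L p0 v0 (Hc h Hh A L Hr p0 v0 He).
have -> : [set k in A | (p0, v0) \in L k] = set0.
  apply/setP => k; rewrite !inE /L /F /tl inE.
  case E1: (n - tau <= k) => /=; last by rewrite andbF.
  case E2: (k < n - tau + f) => /=; first by rewrite andbF.
  rewrite inE eqxx andbT; apply/negbTE; lia.
by rewrite cards0 => /=; lia.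
Qed.
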